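(* Let $t\ge3$, let $\mathcal C$ be an $(n,k,r,t)$-SLRC, let $G$ be a minimal repair graph of $\mathcal C$, and let $v$ be a source of $G$ with $\mathrm{Out}(v)=\{v_1,v_2\}$, $v_1\neq v_2$. Then: 1) $\mathrm{Out}(v_1)\ne\emptyset$ or $\mathrm{Out}(v_2)\ne\emptyset$; 2) if $\{v_1\}=\mathrm{Out}(u)$ for some source $u$, then $\mathrm{Out}(v_2)\ne\emptyset$; 3) if $\{v_1\}=\mathrm{Out}(u)$ for some source $u$, then $|\mathrm{Out}(w)|\ge2$ for every source $w\in\mathrm{In}(v_2)$.
   Context: For an $[n,k]$ linear code $\mathcal C$ over a finite field $\mathbb F$, a recovering set of $i\in[n]$ is a set $R\subseteq[n]\setminus\{i\}$ with nonzero $a_j\in\mathbb F$ such that $x_i=\sum_{j\in R}a_jx_j$ for all $x\in\mathcal C$; standing assumption: recovering sets have size $2\le|R|\le r<k$. $\mathcal C$ is an $(n,k,r,t)$-SLRC if every $E\subseteq[n]$ with $|E|\le t$ can be indexed $\{i_1,\dots,i_{|E|}\}$ so that each $i_\ell$ has a recovering set $R_\ell\subseteq([n]\setminus E)\cup\{i_1,\dots,i_{\ell-1}\}$. A repair graph of $\mathcal C$ is a directed acyclic graph on vertex set $[n]$ such that for every vertex $i$ with nonempty in-neighbourhood $\mathrm{In}(i)$, $\mathrm{In}(i)$ is a recovering set of $i$. A source is a vertex with no in-neighbours. A minimal repair graph is a repair graph with the minimum number of sources among all repair graphs of $\mathcal C$. $\mathrm{Out}(v)$ denotes the set of out-neighbours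 of $v$. *)

(* Defs.v *)
From HB Require Import structures.
From mathcomp Require Import all_boot all_order all_algebra all_fingroup all_field.
Set Implicit Arguments. Unset Strict Implicit. Unset Printing Implicit Defensive.
Import GRing.Theory.
Local Open Scope ring_scope.

(* A linear [n,k] code over a finite field F is a subspace C of F^n = 'rV[F]_n
   with \dim C = k.  Coordinates are indexed by 'I_n ( = [n] ). *)

Definition recovering_set (F : finFieldType) (n r : nat)
  (C : {vspace 'rV[F]_n}) (i : 'I_n) (R : {set 'I_n}) : Prop :=
  [/\ i \notin R, (2 <= #|R| <= r)%N &
      exists a : 'I_n -> F, (forall j, j \in R -> a j != 0) /\
        (forall x : 'rV[F]_n, x \in C -> x 0 i = \sum_(j in R) a j * x 0 j)].

Definition SLRC (F : finFieldType) (n k r t : nat) (C : {vspace 'rV[F]_n}) : Prop :=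
  \dim C = k /\ (r < k)%N /\
  forall E : {set 'I_n}, (#|E| <= t)%N ->
    exists s : seq 'I_n, [/\ uniq s, [set x in s] = E &
      forall l, (l < size s)%N -> forall x0 : 'I_n,
        exists R : {set 'I_n}, recovering_set r C (nth x0 s l) R /\
          R \subset (~: E) :|: [set x in take l s]].

Definition In_nb (n : nat) (e : rel 'I_n) (v : 'I_n) : {set 'I_n} := [set u | e u v].
Definition Out_nb (n : nat) (e : rel 'I_n) (v : 'I_n) : {set 'I_n} := [set w | e v w].

Definition acyclic (n : nat) (e : rel 'I_n) : Prop :=
  forall u v, e u v -> ~~ connect e v u.

Definition is_source (n : nat) (e : rel 'I_n) (v : 'I_n) : Prop := In_nb e v = set0.

Definition sources (n : nat) (e : rel 'I_n) : {set 'I_n} := [set v | In_nb e v == set0].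

Definition repair_graph (F : finFieldType) (n r : nat) (C : {vspace 'rV[F]_n})
  (e : rel 'I_n) : Prop :=
  acyclic e /\ forall i, In_nb e i != set0 -> recovering_set r C i (In_nb e i).

Definition minimal_repair_graph (F : finFieldType) (n r : nat) (C : {vspace 'rV[F]_n})
  (e : rel 'I_n) : Prop :=
  repair_graph r C e /\
  forall e' : rel 'I_n, repair_graph r C e' -> (#|sources e| <= #|sources e'|)%N.

(* Main.v *)
Require Import Defs.
From mathcomp Require Import all_boot all_order all_algebra all_fingroup all_field.
From Stdlib Require Import IndefiniteDescription.
Set Implicit Arguments. Unset Strict Implicit. Unset Printing Implicit Defensive.
Import GRing.Theory.

Lemma fchoice (A B : Type) (P : A -> B -> Prop) :
  (forall a, exists b, P a b) -> exists f : A -> B, forall a, P a (f a).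
Proof.
move=> H; exists (fun a => proj1_sig (constructive_indefinite_description _ (H a))).
by move=> a; case: (constructive_indefinite_description _ (H a)).
Qed.

Lemma key (F : finFieldType) (n k r t : nat) (C : {vspace 'rV[F]_n}) (e : rel 'I_n)
  (E : {set 'I_n}) (v : 'I_n) :
  SLRC k r t C -> minimal_repair_graph r C e -> (#|E| <= t)%N -> v \in E ->
  (forall a, ~~ e a v) -> (forall x y, x \in E -> e x y -> y \in E) -> False.
Proof.
move=> [_ [_ Hs]] [[Hac Hrec] Hmin] HE vE vsrc Hcl.
have [s [us sE Hl]] := Hs E HE.
have [f Hf] : exists f : nat -> {set 'I_n}, forall l, (l < size s)%N ->
   recovering_set r C (nth v s l) (f l) /\ f l \subset ~: E :|: [set x in take l s].
  apply: (@fchoice nat {set 'I_n} (fun l R => (l < size s)%N ->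
     recovering_set r C (nth v s l) R /\ R \subset ~: E :|: [set x in take l s])).
  move=> l; case: (ltnP l (size s)) => hl.
    by have [R HR] := Hl l hl v; exists R.
  by exists set0.
have memE x : (x \in E) = (x \in s) by rewrite -sE inE.
have hidx x : x \in E -> (index x s < size s)%N by move=> xE; rewrite index_mem -memE.
pose e' : rel 'I_n := fun a b => if b \in E then a \in f (index b s) else e a b.
have edgeE : forall a b, a \in E -> e' a b -> b \in E /\ (index a s < index b s)%N.
  move=> a b aE; rewrite /e'; case: ifP => bE.
    move=> af; split => //.
    have bs : b \in s by rewrite -memE.
    have [_ sub] := Hf (index b s) (hidx _ bE).
    move: (subsetP sub a af); rewrite !inE aE /=.
    by rewrite in_take // -memE.
  by move=> /(Hcl _ _ aE); rewrite bE.
have cA : forall x y, connect e' x y -> x \in E -> y \in E /\ (index x s <= index y s)%N.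
  move=> x y /connectP [p]; elim: p x => [|z p IH] x /=; first by move=> _ -> ->.
  move=> /andP [exz pz] yl xE.
  have [zE lt] := edgeE _ _ xE exz.
  have [yE le] := IH z pz yl zE; split => //; exact: leq_trans (ltnW lt) le.
have cB : forall x y, connect e' x y -> y \notin E -> connect e x y.
  move=> x y /connectP [p]; elim: p x => [|z p IH] x /=.
    by move=> _ -> _; exact: connect0.
  move=> /andP [exz pz] yl yE.
  have zE : z \notin E.
    apply/negP => zE.
    have [] := cA z y (introT connectP (ex_intro2 _ _ p pz yl)) zE.
    by rewrite (negbTE yE).
  move: exz; rewrite /e' (negbTE zE) => exz.
  exact: connect_trans (connect1 exz) (IH _ pz yl yE).
have Hrg : repair_graph r C e'.
  split.
  - move=> a b eab; apply/negP => cba.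
    case: (boolP (a \in E)) => aE.
      have [bE lt] := edgeE _ _ aE eab.
      have [_ le] := cA _ _ cba bE.
      by move: (leq_trans lt le); rewrite ltnn.
    have bE : b \notin E.
      apply/negP=> bE; have [] := cA _ _ cba bE; by rewrite (negbTE aE).
    move: eab; rewrite /e' (negbTE bE) => eab.
    by move: (Hac _ _ eab); rewrite (cB _ _ cba aE).
  - move=> i Hi.
    case: (boolP (i \in E)) => iE.
      have -> : In_nb e' i = f (index i s) by apply/setP => a; rewrite inE /e' iE.
      have is_ : i \in s by rewrite -memE.
      have [H _] := Hf (index i s) (hidx _ iE).
      by rewrite nth_index in H.
    have eq : In_nb e' i = In_nb e i by apply/setP => a; rewrite !inE /e' (negbTE iE).
    rewrite eq in Hi *; exact: Hrec.
have Hsub : sources e' \subset sources e.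
  apply/subsetP => x; rewrite !inE => /eqP Hx.
  case: (boolP (x \in E)) => xE.
    exfalso. have xs : x \in s by rewrite -memE.
    have [[_ /andP [c2 _] _] _] := Hf (index x s) (hidx _ xE).
    have : In_nb e' x = f (index x s) by apply/setP => a; rewrite inE /e' xE.
    by rewrite Hx => E0; rewrite -E0 cards0 in c2.
  by rewrite -Hx; apply/eqP/setP => a; rewrite !inE /e' (negbTE xE).
have vS : v \in sources e.
  by rewrite inE; apply/eqP/setP => a; rewrite !inE; exact: negbTE (vsrc a).
have vS' : v \notin sources e'.
  rewrite inE; apply/set0Pn.
  have vs : v \in s by rewrite -memE.
  have [[_ /andP [c2 _] _] _] := Hf (index v s) (hidx _ vE).
  have : (0 < #|f (index v s)|)%N by apply: leq_trans c2.
  move/card_gt0P => [a Ha]; exists a; by rewrite inE /e' vE.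
have lt : (#|sources e'| < #|sources e|)%N.
  apply: proper_card; rewrite properE Hsub /=; apply/subsetPn; by exists v.
by have := Hmin _ Hrg; rewrite leqNgt lt.
Qed.

Section RR.
Local Open Scope ring_scope.
Lemma rev_rec (F : finFieldType) (n r : nat) (C : {vspace 'rV[F]_n}) (u y : 'I_n)
  (R : {set 'I_n}) :
  recovering_set r C y R -> u \in R -> y != u -> recovering_set r C u (y |: (R :\ u)).
Proof.
move=> [yR /andP [c2 cr] [a [anz Ha]]] uR yu.
have aun : a u != 0 := anz u uR.
have card : #|y |: (R :\ u)| = #|R|.
  by rewrite cardsU1 in_setD1 (negbTE yR) andbF (cardsD1 u R) uR.
split.
- by rewrite !inE negb_or eq_sym yu eqxx.
- by rewrite card c2 cr.
- exists (fun j => if j == y then (a u)^-1 else - (a j / a u)).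
  split.
    move=> j; rewrite !inE; case: eqP => [_ | jy] /=.
      by rewrite invr_eq0.
    move=> /andP [_ jR]; by rewrite oppr_eq0 mulf_neq0 ?invr_eq0 ?anz.
  move=> x xC.
  rewrite big_setU1 /=; last by rewrite in_setD1 (negbTE yR) andbF.
  rewrite eqxx (Ha x xC) (big_setD1 u uR) /=.
  have -> : \sum_(j in R :\ u) (if j == y then (a u)^-1 else - (a j / a u)) * x 0 j
      = - (a u)^-1 * \sum_(j in R :\ u) a j * x 0 j.
    rewrite mulr_sumr; apply: eq_bigr => j; rewrite in_setD1 => /andP [_ jR].
    have -> : (j == y) = false by apply/negP => /eqP jy; rewrite -jy jR in yR.
    by rewrite mulNr mulNr mulrA [a j * _]mulrC.
  by rewrite mulrDr mulrA mulVf // mul1r mulNr addrK.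
Qed.
End RR.

Definition revg n (e : rel 'I_n) (u y : 'I_n) : rel 'I_n :=
  fun a b => if b == u then (a == y) || (e a y && (a != u))
             else if b == y then false else e a b.

Lemma rev_min (F : finFieldType) (n r : nat) (C : {vspace 'rV[F]_n}) (e : rel 'I_n)
  (u y : 'I_n) :
  minimal_repair_graph r C e -> (forall a, ~~ e a u) -> (forall b, e u b = (b == y)) ->
  minimal_repair_graph r C (revg e u y).
Proof.
move=> [[Hac Hrec] Hmin] usrc uout.
have euy : e u y by rewrite uout.
have yu : y != u by apply/eqP => yu; move: (usrc u); rewrite -{2}yu euy.
have sinku : forall b, ~~ revg e u y u b.
  move=> b; rewrite /revg; case: eqP => _; first by rewrite eqxx andbF orbF eq_sym (negbTE yu).
  by case: eqP => [//|/eqP nby]; rewrite uout (negbTE nby).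
have redge : forall a b, b != u -> revg e u y a b -> e a b.
  by move=> a b bu; rewrite /revg ?(negbTE bu); case: ifP.
have csink : forall a, connect (revg e u y) u a -> a = u.
  move=> a /connectP [[|z p]] /=; first by move=> _ ->.
  by rewrite (negbTE (sinku z)).
have cR : forall x z, connect (revg e u y) x z -> z != u -> connect e x z.
  move=> x z /connectP [p]; elim: p x => [|w p IH] x /=.
    by move=> _ -> _; exact: connect0.
  move=> /andP [exw pw] zl zu.
  case: (eqVneq w u) => [wu|wu].
    subst w; case: p pw zl IH => [|w' p'] /=.
      by move=> _ zl; rewrite zl eqxx in zu.
    by rewrite (negbTE (sinku w')).
  exact: connect_trans (connect1 (redge _ _ wu exw)) (IH _ pw zl zu).
have Hrg : repair_graph r C (revg e u y).
  split.
  - move=> a b eab; apply/negP => cba.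
    case: (eqVneq a u) => [au|au].
      by subst a; rewrite (negbTE (sinku b)) in eab.
    case: (eqVneq b u) => [bu|bu].
      by subst b; move: (csink _ cba) => au'; rewrite au' eqxx in au.
    by have := Hac _ _ (redge _ _ bu eab); rewrite (cR _ _ cba au).
  - move=> i Hi.
    case: (eqVneq i u) => [iu|iu].
      subst i.
      have -> : In_nb (revg e u y) u = y |: (In_nb e y :\ u).
        by apply/setP => a; rewrite !inE /revg eqxx andbC.
      apply: rev_rec => //; last by rewrite inE.
      apply: Hrec; apply/set0Pn; exists u; by rewrite inE.
    case: (eqVneq i y) => [iy|iy].
      subst i; exfalso; move/set0Pn: Hi => [a]; by rewrite inE /revg (negbTE yu) eqxx.
    have eq : In_nb (revg e u y) i = In_nb e i.
      by apply/setP => a; rewrite !inE /revg (negbTE iu) (negbTE iy).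
    rewrite eq in Hi *; exact: Hrec.
have Seq : sources (revg e u y) = y |: (sources e :\ u).
  apply/setP => x; rewrite !inE.
  case: (eqVneq x u) => [xu|xu].
    subst x; rewrite [u == y]eq_sym (negbTE yu) /=; apply/negbTE/set0Pn; exists y.
    by rewrite inE /revg eqxx eqxx.
  case: (eqVneq x y) => [xy|xy].
    subst x; apply/eqP/setP => a; by rewrite !inE /revg (negbTE yu) eqxx.
  rewrite /=; congr (_ == _); apply/setP => a; by rewrite !inE /revg (negbTE xu) (negbTE xy).
have Scard : #|sources (revg e u y)| = #|sources e|.
  have uS : u \in sources e.
    by rewrite inE; apply/eqP/setP => a; rewrite !inE; exact: negbTE (usrc a).
  have yS : y \notin sources e.
    rewrite inE; apply/set0Pn; exists u; by rewrite inE.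
  by rewrite Seq cardsU1 in_setD1 (negbTE yS) andbF (cardsD1 u (sources e)) uS.
split => // e'' H; rewrite Scard; exact: Hmin.
Qed.

Lemma srcP n (e : rel 'I_n) v : is_source e v -> forall a, ~~ e a v.
Proof. by rewrite /is_source => H a; have := congr1 (fun A : {set 'I_n} => a \in A) H; rewrite /= !inE => ->. Qed.

Lemma outP n (e : rel 'I_n) u y : Out_nb e u = [set y] -> forall b, e u b = (b == y).
Proof. by move=> H b; have := congr1 (fun A : {set 'I_n} => b \in A) H; rewrite /= !inE. Qed.

Lemma out2 n (e : rel 'I_n) u y z : Out_nb e u = [set y; z] ->
  forall b, e u b = (b == y) || (b == z).
Proof. by move=> H b; have := congr1 (fun A : {set 'I_n} => b \in A) H; rewrite /= !inE. Qed.

Lemma card3 n (a b c : 'I_n) : (#|[set a; b; c]| <= 3)%N.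
Proof.
apply: (leq_trans (leq_card_setU _ _)); rewrite cards1 addn1 ltnS.
by apply: (leq_trans (leq_card_setU _ _)); rewrite !cards1.
Qed.

Theorem corollary2 (F : finFieldType) (n k r t : nat) (C : {vspace 'rV[F]_n})
  (e : rel 'I_n) (v v1 v2 : 'I_n) :
  (3 <= t)%N -> SLRC k r t C -> minimal_repair_graph r C e ->
  is_source e v -> Out_nb e v = [set v1; v2] -> v1 != v2 ->
  [/\ Out_nb e v1 != set0 \/ Out_nb e v2 != set0,
      (exists u, is_source e u /\ Out_nb e u = [set v1]) -> Out_nb e v2 != set0 &
      (exists u, is_source e u /\ Out_nb e u = [set v1]) ->
        forall w, is_source e w -> w \in In_nb e v2 -> (2 <= #|Out_nb e w|)%N].
Proof.
move=> t3 Hslrc Hmin vsrc vout v12.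
have [[Hac Hrec] _] := Hmin.
have sv := srcP vsrc.
have ov := out2 vout.
have ev1 : e v v1 by rewrite ov eqxx.
have ev2 : e v v2 by rewrite ov eqxx orbT.
have nself : forall a b, e a b -> a != b.
  move=> a b eab; apply/eqP => ab; subst; move: (Hac _ _ eab); by rewrite connect0.
have eO : forall a b, e a b = (b \in Out_nb e a) by move=> a b; rewrite inE.
have E3 : forall a b c : 'I_n, (#|[set a; b; c]| <= t)%N.
  by move=> a b c; exact: leq_trans (card3 a b c) t3.
split.
- case: (boolP (Out_nb e v1 == set0)) => [/eqP o1|]; last by left.
  case: (boolP (Out_nb e v2 == set0)) => [/eqP o2|]; last by right.
  exfalso; apply: (key (E := [set v; v1; v2]) (v := v) Hslrc Hmin (E3 _ _ _)) => //.
    by rewrite !inE eqxx.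
  move=> x y; rewrite !inE => /orP [/orP [] | ] /eqP ->.
  + by rewrite ov => /orP [] ->; rewrite ?orbT ?orTb.
  + by rewrite eO o1 inE.
  + by rewrite eO o2 inE.
- move=> [u [us uo]]; apply/negP => /eqP o2.
  have su := srcP us; have ou := outP uo.
  have e1min := rev_min Hmin su ou.
  have vu : v != u.
    by apply/eqP => vu; subst u; move: (ou v2); rewrite ev2 eq_sym (negbTE v12).
  have vv1 := nself _ _ ev1.
  apply: (key (E := [set v; u; v2]) (v := v) Hslrc e1min (E3 _ _ _)).
  + by rewrite !inE eqxx.
  + by move=> a; rewrite /revg (negbTE vu) (negbTE vv1); exact: sv.
  + move=> x b; rewrite !inE => /orP [/orP [] | ] /eqP ->;
    (case: (eqVneq b u) => [->|bu]; first by rewrite ?eqxx ?orbT ?orTb);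
    rewrite /revg ?(negbTE bu); (case: (eqVneq b v1) => [->|bv1]; first by rewrite ?eqxx);
    rewrite ?(negbTE bv1).
    * by rewrite ov (negbTE bv1) /= => ->; rewrite ?orbT ?orTb.
    * by rewrite ou (negbTE bv1).
    * by rewrite eO o2 inE.
- move=> [u [us uo]] w ws wv2; rewrite ltnNge; apply/negP => ow.
  have su := srcP us; have ou := outP uo.
  have sw := srcP ws.
  have ewv2 : e w v2 by rewrite inE in wv2.
  have Ow : Out_nb e w = [set v2].
    apply/eqP; rewrite eq_sym eqEcard sub1set cards1 -eO ewv2 /=.
    exact: ow.
  have owb := outP Ow.
  have vu : v != u.
    by apply/eqP => vu; subst u; move: (ou v2); rewrite ev2 eq_sym (negbTE v12).
  have vv1 := nself _ _ ev1.
  have vv2 := nself _ _ ev2.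
  have wu : w != u.
    by apply/eqP => wu; subst u; move: (ou v2); rewrite ewv2 eq_sym (negbTE v12).
  have wv1 : w != v1.
    by apply/eqP => wv1; subst w; move: (sw v); rewrite ev1.
  have wv : w != v.
    by apply/eqP => wv; subst w; move: (owb v1); rewrite ev1 (negbTE v12).
  have v2u : v2 != u.
    by apply/eqP => v2u; subst u; move: (su v); rewrite ev2.
  have e1min := rev_min Hmin su ou.
  pose e1 := revg e u v1.
  have sw1 : forall a, ~~ e1 a w.
    by move=> a; rewrite /e1 /revg (negbTE wu) (negbTE wv1); exact: sw.
  have ow1 : forall b, e1 w b = (b == v2).
    move=> b; rewrite /e1 /revg.
    case: (eqVneq b u) => [->|bu]; first by rewrite (negbTE wv1) (owb v1) (negbTE v12) /=; apply/esym/negbTE; rewrite eq_sym.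
    case: (eqVneq b v1) => [->|bv1]; first by rewrite (negbTE v12).
    exact: owb.
  have e2min := rev_min e1min sw1 ow1.
  apply: (key (E := [set v; u; w]) (v := v) Hslrc e2min (E3 _ _ _)).
  + by rewrite !inE eqxx.
  + move=> a; rewrite /revg eq_sym (negbTE wv) (negbTE vv2).
    by rewrite /e1 /revg (negbTE vu) (negbTE vv1); exact: sv.
  + move=> x b; rewrite !inE => /orP [/orP [] | ] /eqP ->;
    (case: (eqVneq b w) => [->|bw]; first by rewrite ?eqxx ?orbT ?orTb);
    rewrite /revg ?(negbTE bw); (case: (eqVneq b v2) => [->|bv2]; first by rewrite ?eqxx);
    rewrite ?(negbTE bv2);
    (case: (eqVneq b u) => [->|bu]; first by rewrite ?eqxx ?orbT ?orTb);
    rewrite ?(negbTE bu); (case: (eqVneq b v1) => [->|bv1]; first by rewrite ?eqxx);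
    rewrite ?(negbTE bv1).
    * by rewrite ov (negbTE bv1) (negbTE bv2).
    * by rewrite ou (negbTE bv1).
    * by rewrite owb (negbTE bv2).
Qed.
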